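(* Let $\mathbb I=(0,1]\cap\mathbb Q$, canonically arranged as below. Then $\sigma(\mathbb I)=(\Phi(n))_{n\in\mathbb N}$, where $\Phi(n)=\sum_{i=1}^n\varphi(i)$ and $\varphi$ is Euler's totient function; moreover $\sigma(\mathbb I)\approx_\mathcal F\alpha^2$, and more precisely $$\tfrac{3}{10}\,\alpha^2<_\mathcal F\sigma(\mathbb I)<_\mathcal F\frac{\alpha^2-\alpha}{2}.$$
   Context: $\mathbb N=\{1,2,\dots\}$. Each $x\in\mathbb I$ is represented uniquely as the pair $(k,m)\in\mathbb N\times\mathbb N$ with $x=k/m$, $\gcd(k,m)=1$, $k\le m$. $\mathbb N\times\mathbb N$ is arranged with $n$-th component $\{(i,j):\max\{i,j\}=n\}$, and $\mathbb I$ inherits the arrangement, so its $n$-th component is $\mathbb I_n=\{(k,n): \gcd(k,n)=1,\ k\le n\}$. The size sequence is $\sigma(\mathbb I)=(\sigma_n(\mathbb I))_n$, $\sigma_n(\mathbb I)=|\mathbb I_1|+\dots+|\mathbb I_n|$. $\alpha=(n)_n$; operations on sequences are componentwise, rational constants are identified with constant sequences. $(a_n)<_\mathcal F(b_n)$ iff $a_n<b_n$ for all sufficiently large $n$; $(a_n)\ge_\mathcal F(b_n)$ analogously; $(a_n)\approx_\mathcal F(b_n)$ iff some $k\in\mathbb N$ has $k(a_n)\ge_\mathcal F(b_n)$ and some $k$ has $k(b_n)\ge_\mathcal F(a_n)$. *)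

(* Defs.v *)
From mathcomp Require Import all_boot all_order all_algebra.
Set Implicit Arguments. Unset Strict Implicit. Unset Printing Implicit Defensive.
Import Order.TTheory GRing.Theory Num.Theory.
Local Open Scope ring_scope.

(* Elements of I = (0,1] ∩ Q, represented as pairs (k,m) with x = k/m,
   k >= 1, gcd(k,m) = 1, k <= m. *)
Definition inI (p : nat * nat) : bool :=
  [&& (0 < p.1)%N, (p.1 <= p.2)%N & coprime p.1 p.2].

(* n-th component of N x N: {(i,j) : max i j = n}, with N = {1,2,...}. *)
Definition NN_comp (n : nat) : seq (nat * nat) :=
  [seq p <- [seq (i, j) | i <- iota 1 n, j <- iota 1 n] | maxn p.1 p.2 == n].

Definition I_comp (n : nat) : seq (nat * nat) := [seq p <- NN_comp n | inI p].

Definition sigmaI (n : nat) : nat := (\sum_(1 <= i < n.+1) size (I_comp i))%N.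

Definition Phi (n : nat) : nat := (\sum_(1 <= i < n.+1) totient i)%N.

Definition ltF (a b : nat -> rat) : Prop :=
  exists N : nat, forall n : nat, (N <= n)%N -> a n < b n.
Definition geF (a b : nat -> rat) : Prop :=
  exists N : nat, forall n : nat, (N <= n)%N -> b n <= a n.
Definition approxF (a b : nat -> rat) : Prop :=
  (exists k : nat, (0 < k)%N /\ geF (fun n => k%:R * a n) b) /\
  (exists k : nat, (0 < k)%N /\ geF (fun n => k%:R * b n) a).

Definition sigmaQ (n : nat) : rat := (sigmaI n)%:R.
Definition alpha (n : nat) : rat := n%:R.

(* Main.v *)
Require Import Defs.
From mathcomp Require Import all_boot all_order all_algebra.
From mathcomp Require Import ring lra zify.
Import Order.TTheory GRing.Theory Num.Theory.
Set Implicit Arguments. Unset Strict Implicit. Unset Printing Implicit Defensive.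

Lemma size_I_comp i : (0 < i)%N -> size (I_comp i) = totient i.
Proof.
move=> i0.
rewrite /I_comp /NN_comp size_filter count_filter -sum1_count big_mkcond big_allpairs.
rewrite totient_count_coprime.
have -> : \sum_(0 <= d < i) coprime i d = (\sum_(1 <= a < i.+1) coprime a i)%N.
  have h0 : coprime i 0 = (i == 1)%N by rewrite /coprime gcdn0.
  have h1 : coprime i i = (i == 1)%N by rewrite /coprime gcdnn.
  rewrite big_ltn // big_nat_recr //= h0 h1.
  rewrite addnC; congr (_ + _)%N; apply: eq_bigr => a _; by rewrite coprime_sym.
have -> : iota 1 i = index_iota 1 i.+1 by rewrite /index_iota subn1.
apply: eq_big_nat => a /andP[a1 ai].
rewrite big_nat_recr //= big1_seq.
  rewrite add0n /inI /=.
  have ai' : (a <= i)%N by lia.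
  by rewrite a1 ai' (maxn_idPr ai') eqxx andbT.
move=> b; rewrite mem_index_iota => /andP[b1 bi].
rewrite /inI /=; case: ifP => // /andP[/and3P[_ hab _] /eqP hm].
exfalso; move: hm; rewrite (maxn_idPr hab) => hb; lia.
Qed.

Lemma sigmaI_Phi n : sigmaI n = Phi n.
Proof. by apply: eq_big_nat => i /andP[i1 _]; rewrite size_I_comp. Qed.

Definition Tri n (P : nat -> nat -> bool) : nat :=
  (\sum_(1 <= b < n.+1) \sum_(1 <= a < b.+1) P a b)%N.

Lemma sum_mult p n (g : nat -> nat) : (0 < p)%N ->
  (\sum_(1 <= b < n.+1) (p %| b) * g b = \sum_(1 <= b < (n %/ p).+1) g (p * b))%N.
Proof.
move=> p0; elim: n => [|n IH]; first by rewrite div0n !big_geq.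
rewrite big_nat_recr // IH (divnS _ p0).
case: (boolP (p %| n.+1)) => hd /=.
  rewrite add1n [in RHS]big_nat_recr //= ?mul1n; congr (_ + g _)%N.
  have e : (n.+1 %/ p = (n %/ p).+1)%N by rewrite divnS // hd.
  by rewrite -e mulnC divnK.
by rewrite mul0n addn0 add0n.
Qed.

Lemma Tri_mult p n (Q : nat -> nat -> bool) : (0 < p)%N ->
  Tri n (fun a b => [&& p %| a, p %| b & Q a b]) = Tri (n %/ p) (fun a b => Q (p * a) (p * b)).
Proof.
move=> p0; rewrite /Tri.
have E : forall b, (\sum_(1 <= a < b.+1) [&& p %| a, p %| b & Q a b] =
   (p %| b) * \sum_(1 <= a < b.+1) (p %| a) * Q a b)%N.
  move=> b; rewrite big_distrr; apply: eq_bigr => a _.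
  by case: (p %| a); case: (p %| b); case: (Q a b).
rewrite (eq_bigr _ (fun b _ => E b)) sum_mult //.
apply: eq_bigr => b _; by rewrite sum_mult // mulKn.
Qed.

Definition okS (S : seq nat) a b := all (fun q => ~~ ((q %| a) && (q %| b))) S.
Definition f S n := Tri n (okS S).

Lemma eq_Tri n P Q : (forall a b, P a b = Q a b) -> Tri n P = Tri n Q.
Proof. by move=> h; apply: eq_bigr => b _; apply: eq_bigr => a _; rewrite h. Qed.

Lemma f_cons p S n : prime p -> all prime S -> p \notin S ->
  f S n = (f (p :: S) n + f S (n %/ p))%N.
Proof.
move=> pp aS pS.
have E : forall a b, okS S (p * a) (p * b) = okS S a b.
  move=> a b; apply: eq_in_all => q qS.
  have qp : prime q by move/allP: aS => /(_ q qS).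
  have cq : coprime q p.
    rewrite prime_coprime // dvdn_prime2 //.
    by apply/eqP => e; move: pS; rewrite -e qS.
  by rewrite !Gauss_dvdr.
have -> : f S (n %/ p) = Tri n (fun a b => [&& p %| a, p %| b & okS S a b]).
  by rewrite Tri_mult ?prime_gt0 // /f; apply: eq_Tri => a b; rewrite E.
rewrite /f /Tri -big_split /=; apply: eq_bigr => b _.
rewrite -big_split /=; apply: eq_bigr => a _.
rewrite /okS /=.
by case: (p %| a); case: (p %| b); case: (all _ S).
Qed.

Local Open Scope ring_scope.

Lemma TriS n P : Tri n.+1 P = (Tri n P + \sum_(1 <= a < n.+2) P a n.+1)%N.
Proof. by rewrite /Tri big_nat_recr. Qed.

Lemma Tri_true n : (Tri n (fun _ _ => true))%:R = (n%:R * (n%:R + 1) / 2 : rat).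
Proof.
elim: n => [|n IH]; first by rewrite /Tri big_geq //= mul0r mul0r.
rewrite TriS natrD IH sum_nat_const_nat muln1 subn1 /= -[n.+1]addn1 natrD.
by field.
Qed.

Definition cS (S : seq nat) : rat := \prod_(q <- S) (1 - (q%:R ^+ 2)^-1).

Lemma cS_bounds S : all prime S -> 0 <= cS S <= 1.
Proof.
elim: S => [|p S IH] /=; first by rewrite /cS big_nil ler01 lexx.
move=> /andP[pp aS]; move: (IH aS) => /andP[c0 c1].
rewrite /cS big_cons -/(cS S).
have P2 : (2 : rat) <= p%:R by rewrite ler_nat prime_gt1.
have t0 : 0 <= (p%:R ^+ 2 : rat)^-1 by rewrite invr_ge0; nra.
have t1 : (p%:R ^+ 2 : rat)^-1 <= 1 by rewrite invf_le1; nra.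
apply/andP; split; nra.
Qed.

Lemma approx S : all prime S -> uniq S -> forall n : nat,
  (f S n)%:R - cS S * n%:R ^+ 2 / 2 <= (3 ^ size S)%:R * n%:R /\
  cS S * n%:R ^+ 2 / 2 - (f S n)%:R <= (3 ^ size S)%:R * n%:R.
Proof.
elim: S => [|p S IH] /=.
  move=> _ _ n.
  have -> : f [::] n = Tri n (fun _ _ => true) by rewrite /f; apply: eq_Tri.
  rewrite Tri_true /cS big_nil expn0 mul1r.
  have : (0 : rat) <= n%:R by [].
  split; lra.
move=> /andP[pp aS] /andP[pS uS] n.
have p0 := prime_gt0 pp.
have := f_cons n pp aS pS.
set m := (n %/ p)%N => E.
have -> : (f (p :: S) n)%:R = (f S n)%:R - (f S m)%:R :> rat by rewrite E natrD addrK.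
have [c0 c1] := andP (cS_bounds aS).
rewrite /cS big_cons -/(cS S).
set c := cS S.
set x : rat := n%:R; set y : rat := m%:R; set P : rat := p%:R.
set e : rat := (3 ^ size S)%:R.
have -> : (3 ^ (size S).+1)%:R = 3 * e by rewrite expnS natrM.
have e1 : 1 <= e by rewrite /e ler1n expn_gt0.
have x0 : 0 <= x by [].
have y0 : 0 <= y by [].
have P2 : 2 <= P by rewrite /P ler_nat prime_gt1.
have P0 : 0 < P by lra.
have yPx : y * P <= x by rewrite /x /y /P -natrM ler_nat leq_divM.
have xPy : x < (y + 1) * P.
  have -> : (y + 1) * P = (m.+1 * p)%:R by rewrite natrM -natr1.
  by rewrite /x ltr_nat ltn_ceil.
set z := x / P.
have yz : y <= z by rewrite /z ler_pdivlMr.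
have zy : z < y + 1 by rewrite /z ltr_pdivrMr.
have zx : z <= x by rewrite /z ler_pdivrMr //; nra.
have yx : y <= x by lra.
have hz : (1 - (P ^+ 2)^-1) * c * x ^+ 2 / 2 = c * x ^+ 2 / 2 - c * z ^+ 2 / 2 :> rat.
  by rewrite /z; field; rewrite pnatr_eq0 -lt0n.
rewrite hz.
have h1 : z ^+ 2 - y ^+ 2 <= 2 * x by nra.
have h2 : 0 <= z ^+ 2 - y ^+ 2 by nra.
have h3 : c * (z ^+ 2 - y ^+ 2) <= 2 * x.
  by apply: le_trans h1; rewrite ler_piMl.
have h4 : 0 <= c * (z ^+ 2 - y ^+ 2) by rewrite mulr_ge0.
have ey : e * y <= e * x by nra.
have ex : e * x <= 3 * e * x - e * x - x by nra.
have [IHn1 IHn2] := IH aS uS n.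
have [IHm1 IHm2] := IH aS uS m.
rewrite -/x -/y -/c -/e in IHn1 IHn2 IHm1 IHm2.
split; nra.
Qed.

Lemma totient_sum b : (0 < b)%N -> totient b = (\sum_(1 <= a < b.+1) coprime a b)%N.
Proof.
move=> i0; rewrite totient_count_coprime.
have h0 : coprime b 0 = (b == 1)%N by rewrite /coprime gcdn0.
have h1 : coprime b b = (b == 1)%N by rewrite /coprime gcdnn.
rewrite big_ltn // big_nat_recr //= h0 h1.
rewrite addnC; congr (_ + _)%N; apply: eq_bigr => a _; by rewrite coprime_sym.
Qed.

Lemma Phi_Tri n : Phi n = Tri n (fun a b => coprime a b).
Proof. by apply: eq_big_nat => b /andP[b1 _]; rewrite totient_sum. Qed.

Definition S0 := [seq p <- iota 0 201 | prime p].
Arguments S0 : simpl never.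

Lemma S0_prime : all prime S0.
Proof. by apply/allP => q; rewrite mem_filter => /andP[]. Qed.

Lemma S0_uniq : uniq S0.
Proof. by rewrite filter_uniq // iota_uniq. Qed.

Lemma leq_sum_range m N (F G : nat -> nat) :
  (forall i, (m <= i < N)%N -> (F i <= G i)%N) ->
  (\sum_(m <= i < N) F i <= \sum_(m <= i < N) G i)%N.
Proof.
move=> h; rewrite big_nat_cond [X in (_ <= X)%N]big_nat_cond.
by apply: leq_sum => i /andP[hi _]; exact: h.
Qed.

Lemma sum_ge m N q (F : nat -> nat) : (m <= q < N)%N -> (F q <= \sum_(m <= i < N) F i)%N.
Proof.
move=> /andP[h1 h2]; rewrite (big_cat_nat (n:=q)) /=; last exact: ltnW; last exact: h1.
by rewrite [\sum_(q <= i < N) _]big_ltn // addnCA leq_addr.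
Qed.

Lemma Tri_le_f n : (Tri n (fun a b => coprime a b) <= f S0 n)%N.
Proof.
apply: leq_sum => b _; apply: leq_sum => a _.
case: (boolP (coprime a b)) => // cab.
have -> : okS S0 a b = true; last by [].
apply/allP => q qS; apply/negP => /andP[qa qb].
have qp : prime q by move: qS; rewrite mem_filter => /andP[].
move: cab; rewrite /coprime => /eqP g1.
have : (q %| gcdn a b)%N by rewrite dvdn_gcd qa qb.
by rewrite g1 dvdn1 => /eqP q1; move: qp; rewrite q1.
Qed.

Lemma okS_false S a b q : q \in S -> (q %| a)%N -> (q %| b)%N -> okS S a b = false.
Proof. by move=> qS qa qb; apply/negbTE/negP => /allP /(_ q qS); rewrite qa qb. Qed.

Lemma f_le n : (f S0 n <= Tri n (fun a b => coprime a b) +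
   \sum_(201 <= q < n.+1) Tri n (fun a b => [&& q %| a, q %| b & true]))%N.
Proof.
rewrite /f /Tri exchange_big -big_split.
apply: leq_sum_range => b /andP[b1 bn].
rewrite exchange_big -big_split.
apply: leq_sum_range => a /andP[a1 ab].
change (okS S0 a b <= coprime a b + \sum_(201 <= i < n.+1) [&& i %| a, i %| b & true])%N.
case: (boolP (coprime a b)) => cab.
  by apply: leq_trans (leq_addr _ _); case: (okS S0 a b).
have g0 : (0 < gcdn a b)%N by rewrite gcdn_gt0 a1.
have g1 : (1 < gcdn a b)%N.
  move: cab; rewrite /coprime; move: g0; case: (gcdn a b) => [|[|k]] //.
set q := pdiv (gcdn a b).
have qp : prime q by apply: pdiv_prime.
have qg : (q %| gcdn a b)%N by apply: pdiv_dvd.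
move: (qg); rewrite dvdn_gcd => /andP[qa qb].
have qle : (q <= a)%N.
  apply: leq_trans (pdiv_leq g0) _; apply: dvdn_leq => //; exact: dvdn_gcdl.
case: (leqP q 200) => hq.
  have hS : okS S0 a b = false.
    apply: (okS_false (q := q)) => //.
    rewrite mem_filter qp mem_iota.
    apply/andP; split; lia.
  by rewrite hS.
change (okS S0 a b <= 0 + \sum_(201 <= i < n.+1) [&& i %| a, i %| b & true])%N.
rewrite add0n.
have hr : (201 <= q < n.+1)%N by apply/andP; split; lia.
have hF := sum_ge (fun i => [&& i %| a, i %| b & true])%N hr.
apply: (leq_trans _ hF).
by rewrite qa qb; case: (okS S0 a b).
Qed.

Lemma telesc (B : nat) k : (0 < B)%N ->
  \sum_(B.+1 <= q < B.+1 + k) (q%:R ^+ 2 : rat)^-1 <= B%:R^-1 - (B + k)%:R^-1.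
Proof.
move=> B0; elim: k => [|k IH].
  by rewrite addn0 big_geq // addn0 subrr.
rewrite addnS big_nat_recr /=; last by lia.
set N : rat := (B + k)%:R.
have N1 : 1 <= N by rewrite /N ler1n; lia.
have -> : (B.+1 + k)%:R = N + 1 by rewrite /N addSn natr1.
have -> : (B + k.+1)%:R = N + 1 by rewrite /N addnS natr1.
have e : N^-1 - (N + 1)^-1 - ((N + 1) ^+ 2)^-1 = (N * (N + 1) ^+ 2)^-1.
  by field; apply/andP; split; apply/eqP; lra.
have : 0 <= (N * (N + 1) ^+ 2)^-1.
  by rewrite invr_ge0; apply: mulr_ge0; nra.
lra.
Qed.

Lemma sum_inv_sq N : \sum_(201 <= q < N) (q%:R ^+ 2 : rat)^-1 <= 200%:R^-1.
Proof.
case: (leqP N 201) => h.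
  rewrite big_geq; last exact: h.
  by rewrite invr_ge0 ler0n.
have -> : N = (200.+1 + (N - 201))%N by lia.
apply: le_trans (telesc _ _) _; first by [].
have : 0 <= ((200 + (N - 201))%:R : rat)^-1 by rewrite invr_ge0 ler0n.
lra.
Qed.

Lemma tail n : (\sum_(201 <= q < n.+1) Tri n (fun a b => [&& q %| a, q %| b & true])%N)%:R
   <= (101/200) * n%:R ^+ 2 / 200%:R + 25/2 * n%:R :> rat.
Proof.
rewrite natr_sum.
set x : rat := n%:R.
apply: (@le_trans _ _ (\sum_(201 <= q < n.+1) ((101/200) * x ^+ 2 * (q%:R ^+ 2)^-1 + 25/2))).
  rewrite big_nat_cond [X in _ <= X]big_nat_cond.
  apply: ler_sum => q /andP[/andP[q1 _] _].
  have q0 : (0 < q)%N by lia.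
  rewrite (Tri_mult n (fun _ _ => true) q0) Tri_true.
  set y : rat := (n %/ q)%:R.
  set Q : rat := q%:R.
  have Q0 : 0 < Q by rewrite /Q ltr0n.
  have yQ : y * Q <= x by rewrite /y /Q /x -natrM ler_nat leq_divM.
  have y0 : 0 <= y by rewrite /y ler0n.
  have yx : y <= x / Q by rewrite ler_pdivlMr.
  have y2 : y ^+ 2 <= x ^+ 2 * (Q ^+ 2)^-1.
    have -> : x ^+ 2 * (Q ^+ 2)^-1 = (x / Q) ^+ 2 by rewrite exprMn exprVn.
    rewrite ler_sqr; first exact: yx.
      by rewrite nnegrE.
    by rewrite nnegrE; apply: le_trans yx.
  have h50 : 0 <= (y - 50) ^+ 2 by apply: sqr_ge0.
  have : y <= y ^+ 2 / 100 + 25 by nra.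
  nra.
rewrite big_split /= -mulr_sumr sumr_const_nat.
have hs := sum_inv_sq n.+1.
have x0 : 0 <= x by rewrite /x ler0n.
have hk : (25 / 2 : rat) *+ (n.+1 - 201) <= 25 / 2 * x.
  have hk' : ((n.+1 - 201)%:R : rat) <= x by rewrite /x ler_nat; lia.
  rewrite -mulr_natr; lra.
have hx2 : 0 <= 101 / 200 * x ^+ 2 by apply: mulr_ge0; [lra | rewrite exprn_ge0].
have : 101 / 200 * x ^+ 2 * \sum_(201 <= i < n.+1) (i%:R ^+ 2)^-1 <= 101 / 200 * x ^+ 2 * 200%:R^-1.
  by rewrite ler_wpM2l.
lra.
Qed.

Lemma S0E : S0 = [:: 2; 3; 5; 7; 11; 13; 17; 19; 23; 29; 31; 37; 41; 43; 47; 53; 59; 61; 67; 71; 73; 79; 83; 89; 97; 101; 103; 107; 109; 113; 127; 131; 137; 139; 149; 151; 157; 163; 167; 173; 179; 181; 191; 193; 197; 199]%N.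
Proof. by vm_compute. Qed.

Lemma num : 3/5 + 101/100 / 200 + 1/1000 <= cS S0 /\ cS S0 <= 9/10.
Proof.
rewrite S0E /cS !big_cons big_nil.
split; lra.
Qed.

Lemma final_arith (x e c F T1 T2 : rat) : 0 <= e -> 2000 * (e + 13) + 1 <= x ->
  3/5 + 101/100 / 200 + 1/1000 <= c -> c <= 9/10 ->
  F - c * x ^+ 2 / 2 <= e * x -> c * x ^+ 2 / 2 - F <= e * x ->
  F <= T1 + T2 -> T2 <= (101/200) * x ^+ 2 / 200%:R + 25/2 * x -> T1 <= F ->
  3%:R / 10%:R * x ^+ 2 < T1 /\ T1 < (x ^+ 2 - x) / 2%:R.
Proof.
move=> e0 hx hc1 hc2 a1 a2 hf' ht hu.
have x0 : 0 < x by lra.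
have hprod : 0 < x * (x - 2000 * (e + 13)) by apply: mulr_gt0; lra.
have ex : 0 <= e * x by apply: mulr_ge0; lra.
have x2 : 0 <= x ^+ 2 by apply: sqr_ge0.
have hcx1 : (3/5 + 101/100 / 200 + 1/1000) * x ^+ 2 <= c * x ^+ 2 by exact: (ler_wpM2r x2 hc1).
have hcx2 : c * x ^+ 2 <= 9/10 * x ^+ 2 by exact: (ler_wpM2r x2 hc2).
split; lra.
Qed.

Lemma bounds n : ((2000 * (3 ^ size S0 + 13)).+1 <= n)%N ->
  3%:R / 10%:R * n%:R ^+ 2 < (Phi n)%:R :> rat /\
  (Phi n)%:R < (n%:R ^+ 2 - n%:R) / 2%:R :> rat.
Proof.
move=> hn.
have [a1 a2] := approx S0_prime S0_uniq n.
have [hc1 hc2] := num.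
rewrite Phi_Tri.
apply: (final_arith _ _ hc1 hc2 a1 a2 _ (tail n)).
- exact: ler0n.
- have eq : forall k : nat, ((2000 * (k + 13)).+1%:R : rat) = 2000 * (k%:R + 13) + 1.
    by move=> k; rewrite -natr1 natrM natrD.
  rewrite -eq ler_nat; exact: hn.
- rewrite -natrD ler_nat; exact: (f_le n).
- rewrite ler_nat; exact: Tri_le_f.
Qed.

Theorem theorem10 :
  (forall n : nat, (0 < n)%N -> sigmaI n = Phi n) /\
  approxF sigmaQ (fun n => alpha n ^+ 2) /\
  ltF (fun n => (3%:R / 10%:R) * alpha n ^+ 2) sigmaQ /\
  ltF sigmaQ (fun n => (alpha n ^+ 2 - alpha n) / 2%:R).
Proof.
have B : forall n, ((2000 * (3 ^ size S0 + 13)).+1 <= n)%N ->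
  3%:R / 10%:R * alpha n ^+ 2 < sigmaQ n /\ sigmaQ n < (alpha n ^+ 2 - alpha n) / 2%:R.
  move=> n hn; rewrite /sigmaQ sigmaI_Phi /alpha; exact: bounds hn.
split; first by move=> n _; exact: sigmaI_Phi.
split; last first.
  split; exists (2000 * (3 ^ size S0 + 13)).+1 => n hn; have [h1 h2] := B n hn.
    exact: h1.
  exact: h2.
split.
  exists 4%N; split; first by [].
  exists (2000 * (3 ^ size S0 + 13)).+1 => n hn; have [h1 h2] := B n hn.
  clear hn; move: h1 h2; rewrite /alpha.
  move: (sigmaQ n) => s; move: (n%:R : rat) => x h1 h2.
  have : 0 <= x ^+ 2 by apply: sqr_ge0.
  lra.
exists 1%N; split; first by [].
exists (2000 * (3 ^ size S0 + 13)).+1 => n hn; have [h1 h2] := B n hn.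
clear hn; move: h1 h2; rewrite /alpha.
move: (sigmaQ n) => s.
have x0 : (0 : rat) <= n%:R by apply: ler0n.
move: x0; move: (n%:R : rat) => x x0 h1 h2.
have : 0 <= x ^+ 2 by apply: sqr_ge0.
lra.
Qed.
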